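(* Let $f(x_1,\ldots,x_n)=\gamma x_1^{\alpha_1}\cdots x_n^{\alpha_n}$ be an $n$-input Cobb–Douglas production function, where $\gamma>0$ and $\alpha_1,\ldots,\alpha_n$ are nonzero constants. Then the production hypersurface $\Phi(f)=\{(x,f(x))\}$ is isotropic minimal in $\mathbf{I}^{n+1}$ if and only if $f=\gamma x_1\cdots x_n$ for some nonzero constant $\gamma$ (i.e. $\alpha_1=\cdots=\alpha_n=1$).
   Context: The isotropic space $\mathbf{I}^{n+1}$ is $\mathbb{R}^{n+1}$ with the degenerate isotropic metric, the $x_{n+1}$-direction being isotropic; the graph $\Phi(f)=\{(x,f(x)):x\in D\}$ of a function $f$ on a domain $D\subset\mathbb{R}^n$ is regarded as a hypersurface in $\mathbf{I}^{n+1}$. Its isotropic mean curvature is $K_1=\frac1n\operatorname{trace}(D^2f)=\frac1n\Delta f$ with $\Delta=\sum_j\partial^2/\partial x_j^2$; $\Phi(f)$ is isotropic minimal if $K_1\equiv0$, i.e. $\Delta f=0$. *)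

(* Defs.v *)
From HB Require Import structures.
From mathcomp Require Import all_boot all_order all_algebra.
From mathcomp Require Import all_classical all_reals all_analysis.
Set Implicit Arguments. Unset Strict Implicit. Unset Printing Implicit Defensive.
Import Order.TTheory GRing.Theory Num.Theory.
Import numFieldNormedType.Exports.
Local Open Scope ring_scope.

Definition basis_vec (R : realType) (n : nat) (j : 'I_n) : 'rV[R]_n :=
  delta_mx 0 j.

Definition laplacian (R : realType) (n : nat) (f : 'rV[R]_n -> R)
    (x : 'rV[R]_n) : R :=
  \sum_(j < n) 'D_(basis_vec R j) ('D_(basis_vec R j) f) x.

(* Isotropic mean curvature K_1 = (1/n) trace(D^2 f) = (1/n) Delta f. *)
Definition isotropic_mean_curvature (R : realType) (n : nat)
    (f : 'rV[R]_n -> R) (x : 'rV[R]_n) : R :=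
  (n%:R)^-1 * laplacian f x.

Definition isotropic_minimal (R : realType) (n : nat)
    (D : set 'rV[R]_n) (f : 'rV[R]_n -> R) : Prop :=
  forall x, D x -> isotropic_mean_curvature f x = 0.

Definition pos_orthant (R : realType) (n : nat) : set 'rV[R]_n :=
  [set x | forall i : 'I_n, 0 < x ord0 i].

Definition cobb_douglas (R : realType) (n : nat) (gamma : R)
    (alpha : 'I_n -> R) (x : 'rV[R]_n) : R :=
  gamma * \prod_(i < n) (x ord0 i) `^ (alpha i).

(* Main.v *)
Require Import Defs.
From HB Require Import structures.
Set Warnings "-all".
From mathcomp Require Import all_boot all_order all_algebra.
From mathcomp Require Import all_classical all_reals all_analysis.
From mathcomp Require Import lra.
Import Order.TTheory GRing.Theory Num.Theory.
Import numFieldNormedType.Exports.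
Local Open Scope ring_scope.

Section S.
Variable R : realType.

Lemma D_line (n : nat) (f : 'rV[R]_n -> R) (v y : 'rV[R]_n) :
  'D_v f y = 'D_1 (fun s : R => f (s *: v + y)) 0.
Proof.
rewrite /derive.
have -> : (fun h : R => h^-1 *: ((f \o shift y) (h *: v) - f y)) =
  (fun h : R => h^-1 *: (((fun s : R => f (s *: v + y)) \o shift 0) (h *: (1:R)) - f (0 *: v + y))).
  by apply/funext => h /=; rewrite scale0r add0r addr0 -[h%:A]/(h * 1) mulr1.
by [].
Qed.

Lemma D_line1 (g : R -> R) (c : R) :
  'D_1 g c = 'D_1 (fun s : R => g (s + c)) 0.
Proof.
rewrite /derive.
have -> : (fun h : R => h^-1 *: ((g \o shift c) (h *: (1:R)) - g c)) =
  (fun h : R => h^-1 *: (((fun s : R => g (s + c)) \o shift 0) (h *: (1:R)) - g (0 + c))).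
  by apply/funext => h /=; rewrite add0r addr0.
by [].
Qed.

Lemma D_pow (K a c : R) : 0 < c ->
  'D_1 (fun s : R => K * (s + c) `^ a) 0 = K * (a * c `^ (a - 1)).
Proof.
move=> c0.
rewrite -(D_line1 (fun t => K * t `^ a)).
have H : is_derive c 1 (fun t => K * t `^ a) (K * (a * c `^ (a - 1))).
  have := is_deriveZ K (is_derive1_powR a c0).
  by [].
exact: (@derive_val _ _ _ _ _ _ _ H).
Qed.

Variables (n : nat) (gamma : R) (alpha : 'I_n -> R).
Let f := cobb_douglas gamma alpha.

Definition Cj (j : 'I_n) (y : 'rV[R]_n) : R :=
  gamma * \prod_(i < n | i != j) y ord0 i `^ alpha i.

Lemma line_coord (j i : 'I_n) (s : R) (y : 'rV[R]_n) :
  (s *: basis_vec R j + y) ord0 i = (if i == j then s + y ord0 i else y ord0 i).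
Proof.
rewrite /basis_vec !mxE eqxx /=.
by case: eqP => _; rewrite ?mulr1 ?mulr0 ?add0r.
Qed.

Lemma f_line (j : 'I_n) (s : R) (y : 'rV[R]_n) :
  f (s *: basis_vec R j + y) = Cj j y * (s + y ord0 j) `^ alpha j.
Proof.
rewrite /f /cobb_douglas /Cj (bigD1 j) //= line_coord eqxx.
rewrite [RHS]mulrAC -mulrA; congr (_ * (_ * _)).
by apply: eq_bigr => i /negbTE ij; rewrite line_coord ij.
Qed.

Lemma Cj_line (j : 'I_n) (s : R) (y : 'rV[R]_n) :
  Cj j (s *: basis_vec R j + y) = Cj j y.
Proof.
rewrite /Cj; congr (_ * _); apply: eq_bigr => i /negbTE ij.
by rewrite line_coord ij.
Qed.

Lemma D1_formula (j : 'I_n) (y : 'rV[R]_n) : 0 < y ord0 j ->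
  'D_(basis_vec R j) f y = Cj j y * (alpha j * y ord0 j `^ (alpha j - 1)).
Proof.
move=> yj; rewrite D_line.
have -> : (fun s : R => f (s *: basis_vec R j + y)) =
   (fun s => Cj j y * (s + y ord0 j) `^ alpha j).
  by apply/funext => s; rewrite f_line.
exact: D_pow.
Qed.

Lemma D2_formula (j : 'I_n) (x : 'rV[R]_n) : 0 < x ord0 j ->
  'D_(basis_vec R j) ('D_(basis_vec R j) f) x =
   Cj j x * (alpha j * ((alpha j - 1) * x ord0 j `^ (alpha j - 1 - 1))).
Proof.
move=> xj; rewrite D_line.
rewrite (@near_eq_derive _ _ _ _ (fun s => (Cj j x * alpha j) * (s + x ord0 j) `^ (alpha j - 1))); last first.
  near=> s.
  have hs : `|s| < x ord0 j.
    by near: s; exists (x ord0 j) => // z /=; rewrite sub0r normrN.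
  have pos : 0 < s + x ord0 j.
    move: hs; rewrite ltr_norml => /andP[h _]; lra.
  rewrite D1_formula; last by rewrite line_coord eqxx.
  by rewrite Cj_line line_coord eqxx mulrA.
by rewrite D_pow // -!mulrA.
Unshelve. all: by end_near.
Qed.

Lemma f_eq (j : 'I_n) (x : 'rV[R]_n) : f x = Cj j x * x ord0 j `^ alpha j.
Proof. by have := f_line j 0 x; rewrite scale0r add0r add0r. Qed.

Lemma lap_formula (x : 'rV[R]_n) : pos_orthant x ->
  laplacian f x = f x * \sum_(j < n) (alpha j * (alpha j - 1)) / (x ord0 j ^+ 2).
Proof.
move=> xp; rewrite /laplacian mulr_sumr; apply: eq_bigr => j _.
rewrite D2_formula ?xp // (f_eq j).
have -> : alpha j - 1 - 1 = alpha j - 2%:R by rewrite -addrA; congr (_ + _); rewrite -opprD.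
rewrite powRB; last by apply/implyP => _; rewrite gt_eqF ?xp.
rewrite powR_mulrn; last exact/ltW/xp.
rewrite !mulrA; congr (_ * _); rewrite -!mulrA; congr (_ * _).
by congr (_ * _); rewrite mulrA mulrC.
Qed.

Lemma f_gt0 (x : 'rV[R]_n) : 0 < gamma -> pos_orthant x -> 0 < f x.
Proof.
move=> g0 xp; rewrite /f /cobb_douglas mulr_gt0 //.
by apply: prodr_gt0 => i _; apply: powR_gt0.
Qed.
End S.

Theorem proposition4p2 (R : realType) (n : nat) (gamma : R)
    (alpha : 'I_n -> R) :
  0 < gamma -> (forall i, alpha i != 0) ->
  (isotropic_minimal (@pos_orthant R n) (cobb_douglas gamma alpha)
   <-> (forall i, alpha i = 1)).
Proof.
move=> g0 anz; split.
- move=> H i.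
  have n0 : (n%:R : R) != 0 by rewrite pnatr_eq0 -lt0n; exact: (leq_ltn_trans (leq0n i) (ltn_ord i)).
  pose xt (t : R) : 'rV[R]_n := \row_k (if k == i then t else 1).
  have xtp t : 0 < t -> pos_orthant (xt t).
    by move=> t0 k; rewrite /xt mxE; case: ifP.
  have S t : 0 < t -> alpha i * (alpha i - 1) / t ^+ 2 +
      \sum_(k < n | k != i) alpha k * (alpha k - 1) = 0.
    move=> t0; have := H _ (xtp t t0).
    rewrite /isotropic_mean_curvature lap_formula; last exact: xtp.
    move/eqP; rewrite mulf_eq0 invr_eq0 (negbTE n0) /= mulf_eq0.
    rewrite gt_eqF /=; last by apply: f_gt0 => //; exact: xtp.
    rewrite (bigD1 i) //= /xt mxE eqxx => /eqP e; rewrite -[RHS]e.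
    congr (_ + _); apply: eq_bigr => k /negbTE ki.
    by rewrite mxE ki expr1n divr1.
  have := S 1 ltr01; have := S 2 (ltr0Sn _ 1).
  rewrite expr1n divr1 => e2 e1.
  have : alpha i * (alpha i - 1) = 0.
    have : alpha i * (alpha i - 1) / 2 ^+ 2 = alpha i * (alpha i - 1).
      by apply: (addIr (\sum_(k < n | k != i) alpha k * (alpha k - 1))); rewrite e1 e2.
    set c := alpha i * (alpha i - 1) => hc.
    have : c * (1 - (2 ^+ 2)^-1) = 0 by rewrite mulrBr mulr1 hc subrr.
    move/eqP; rewrite mulf_eq0 => /orP[/eqP //|].
    rewrite subr_eq0 => /eqP h; exfalso; move: h.
    rewrite -[X in X = _]invr1 => /invr_inj /eqP; rewrite expr2; lra.
  move/eqP; rewrite mulf_eq0 (negbTE (anz i)) /= subr_eq0 => /eqP //.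
- move=> a1 x xp.
  rewrite /isotropic_mean_curvature lap_formula //.
  rewrite big1 ?mulr0 // => j _; by rewrite a1 subrr mulr0 mul0r.
Qed.
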